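(* If $D$ is a quaternary near-extremal Hermitian self-dual code of length $30$ and $\alpha$ denotes the number of codewords of weight $10$ in $D$, then $\alpha=9\beta$ for some integer $\beta$ with $1\le\beta\le 1319$.
   Context: Let $\mathbb{F}_4=\{0,1,\omega,\omega^2\}$ with $\omega^2=\omega+1$. A quaternary code of length $n$ is a linear subspace of $\mathbb{F}_4^n$; it is Hermitian self-dual if it equals its dual with respect to $\langle x,y\rangle_H=\sum_k x_k y_k^2$. The weight of a vector is the number of nonzero coordinates. A quaternary Hermitian self-dual code of length $30$ is near-extremal if its minimum nonzero weight is $10$. *)

(* Defs.v *)
From HB Require Import structures.
From mathcomp Require Import all_boot all_order all_algebra.
Set Implicit Arguments. Unset Strict Implicit. Unset Printing Implicit Defensive.
Import GRing.Theory.
Local Open Scope ring_scope.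

(* Quaternary codes: F is a finite field with exactly 4 elements (unique up to
   isomorphism, i.e. F_4); its nontrivial automorphism is y |-> y^2. *)

Definition herm (F : fieldType) (n : nat) (x y : 'rV[F]_n) : F :=
  \sum_(k < n) x 0 k * (y 0 k) ^+ 2.

Definition wt (F : fieldType) (n : nat) (x : 'rV[F]_n) : nat :=
  #|[set k : 'I_n | x 0 k != 0]|.

Definition herm_self_dual (F : fieldType) (n : nat) (C : {vspace 'rV[F]_n}) :=
  forall y : 'rV[F]_n, (y \in C) <-> (forall x : 'rV[F]_n, x \in C -> herm x y = 0).

Definition min_weight (F : fieldType) (n : nat) (C : {vspace 'rV[F]_n}) (d : nat) :=
  (exists2 x : 'rV[F]_n, x \in C & (x != 0) /\ wt x = d) /\
  (forall x : 'rV[F]_n, x \in C -> x != 0 -> (d <= wt x)%N).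

Definition num_weight (F : finFieldType) (n : nat) (C : {vspace 'rV[F]_n}) (w : nat) : nat :=
  #|[set x : 'rV[F]_n | (x \in C) && (wt x == w)]|.

(* Main.v *)
From Stdlib Require Import ZArith Lia.
Require Import Defs.
From HB Require Import structures.
From mathcomp Require Import all_boot all_order all_algebra all_field.
From mathcomp Require Import zify.
Set Implicit Arguments. Unset Strict Implicit. Unset Printing Implicit Defensive.

Module PartB.
Import GRing.Theory.
Local Open Scope ring_scope.

Lemma card_sep (T : finType) (A : {set T}) (P : pred T) :
  #|[set w in A | P w]| = (\sum_(w in A) P w)%N.
Proof.
rewrite -sum1_card [RHS]big_mkcond [LHS]big_mkcond; apply: eq_bigr => w _.
by rewrite !inE; case: (w \in A); case: (P w).
Qed.

Lemma sum_split2 (T : finType) (A B : {set T}) (g : T -> nat) c1 c2 :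
  (forall z, z \in A -> z \in B -> g z = c1) ->
  (forall z, z \in A -> z \notin B -> g z = c2) ->
  (\sum_(z in A) g z = #|A :&: B| * c1 + #|A :\: B| * c2)%N.
Proof.
move=> h1 h2; rewrite (bigID (mem B)) /=.
rewrite (eq_bigl (mem (A :&: B))); last by move=> z; rewrite !inE andbC.
rewrite [X in (_ + X)%N](eq_bigl (mem (A :\: B))); last by move=> z; rewrite !inE andbC.
rewrite -!sum_nat_const; congr addn; apply: eq_bigr => z; rewrite !inE => /andP[].
  by move=> xB xA; apply: h1.
by move=> xB xA; apply: h2.
Qed.

Lemma count_Sk (T : finType) (k : T) (Z : {set T}) t : k \in Z ->
  #|[set S : {set T} | [&& k \in S, #|S| == t.+1 & S \subset Z]]| = 'C(#|Z|.-1, t).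
Proof.
move=> kZ.
have cZ : #|Z :\ k| = #|Z|.-1 by rewrite (cardsD1 k Z) kZ.
rewrite -cZ -cards_draws.
have -> : [set S : {set T} | [&& k \in S, #|S| == t.+1 & S \subset Z]] =
   (fun S => k |: S) @: [set A : {set T} | A \subset Z :\ k & #|A| == t].
  apply/setP => S; rewrite inE; apply/idP/imsetP.
  - case/and3P => kS /eqP cS sZ; exists (S :\ k); last by rewrite setD1K.
    rewrite inE (setSD _ sZ) /=.
    by move: cS; rewrite (cardsD1 k S) kS add1n => -[->].
  - case=> S'; rewrite inE => /andP [sS' /eqP cS'] ->.
    have kS' : k \notin S'.
      by apply/negP => /(subsetP sS'); rewrite setD11.
    rewrite setU11 cardsU1 kS' cS' /= subUset sub1set kZ /=.
    rewrite add1n eqxx /=; apply: (subset_trans sS'); apply: subD1set.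
rewrite card_in_imset // => S1 S2; rewrite !inE => /andP [s1 _] /andP [s2 _] e.
have k1 : k \notin S1 by apply/negP => /(subsetP s1); rewrite setD11.
have k2 : k \notin S2 by apply/negP => /(subsetP s2); rewrite setD11.
by rewrite -(setU1K k1) -(setU1K k2) e.
Qed.

Section Field4.
Variable F : finFieldType.
Hypothesis HF : #|F| = 4%N.

Lemma char2 : (2 \in [pchar F])%N.
Proof. by apply: (@card_finPcharP _ 2 2) => //; rewrite HF. Qed.

Lemma exp4 (a : F) : a ^+ 4 = a.
Proof. by rewrite -[in X in _ ^+ X]HF expf_card. Qed.

Lemma sqsq (a : F) : (a ^+ 2) ^+ 2 = a.
Proof. by rewrite -exprM exp4. Qed.

Lemma cube1 (a : F) : a != 0 -> a ^+ 3 = 1.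
Proof.
move=> a0; apply: (mulIf a0); rewrite mul1r -exprSr; exact: exp4.
Qed.

Lemma sqrD (a b : F) : (a + b) ^+ 2 = a ^+ 2 + b ^+ 2.
Proof. by rewrite sqrrD mulrn_pchar ?char2 // addr0. Qed.

Lemma natr_eq0_even (m : nat) : ((m%:R : F) == 0) = ~~ odd m.
Proof. by rewrite -(dvdn_pcharf char2) dvdn2. Qed.

Variable n : nat.
Implicit Types x y : 'rV[F]_n.

Lemma herm_addl x x' y : herm (x + x') y = herm x y + herm x' y.
Proof. by rewrite /herm -big_split; apply: eq_bigr => k _; rewrite mxE mulrDl. Qed.

Lemma herm_scalel a x y : herm (a *: x) y = a * herm x y.
Proof. rewrite /herm mulr_sumr; under eq_bigr => k _ do rewrite mxE -mulrA. by []. Qed.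

Lemma herm_addr x y y' : herm x (y + y') = herm x y + herm x y'.
Proof. by rewrite /herm -big_split; apply: eq_bigr => k _; rewrite mxE sqrD mulrDr. Qed.

Lemma herm_scaler a x y : herm x (a *: y) = a ^+ 2 * herm x y.
Proof.
rewrite /herm mulr_sumr; under eq_bigr => k _ do rewrite mxE exprMn mulrCA. by [].
Qed.

Lemma herm_self x : herm x x = (wt x)%:R.
Proof.
rewrite /herm /wt.
under eq_bigr => k _ do rewrite -exprS.
rewrite -sum1_card natr_sum [in RHS]big_mkcond /=.
apply: eq_bigr => k _; rewrite inE; case: eqP => [->|/eqP h]; first by rewrite expr0n.
by rewrite cube1.
Qed.

Lemma quarter (A : {set 'rV[F]_n}) (f : 'rV[F]_n -> F) :
  (forall u v, u \in A -> v \in A -> u + v \in A) ->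
  (forall u, u \in A -> - u \in A) ->
  (forall u v, u \in A -> v \in A -> f (u + v) = f u + f v) ->
  (forall a, exists2 z, z \in A & f z = a) ->
  #|A| = (#|F| * #|[set u in A | f u == 0%R]|)%N.
Proof.
move=> Hadd Hopp Hf Hsurj.
have fiber a : #|[set u in A | f u == a]| = #|[set u in A | f u == 0]|.
  have [z zA fz] := Hsurj a.
  have -> : [set u in A | f u == a] = (fun u => u + z) @: [set u in A | f u == 0].
    apply/setP => u; rewrite inE; apply/andP/imsetP.
    - case=> uA /eqP fu; exists (u - z); last by rewrite subrK.
      have uzA : u - z \in A by rewrite Hadd ?Hopp.
      rewrite inE uzA /=.
      have := Hf _ _ uzA zA; rewrite subrK fu fz => h.
      by apply/eqP; apply: (addIr a); rewrite -h add0r.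
    - case=> v; rewrite inE => /andP [vA /eqP fv] ->.
      by rewrite Hadd //= Hf // fv fz add0r eqxx.
  by rewrite card_imset //; exact: addIr.
rewrite -sum1_card (partition_big f predT) //=.
rewrite (eq_bigr (fun _ => #|[set u in A | f u == 0]|)); last first.
  move=> a _; rewrite -(fiber a) -sum1_card; apply: eq_bigl => u; by rewrite inE.
by rewrite sum_nat_const.
Qed.

Definition VS (S : {set 'I_n}) := [set y : 'rV[F]_n | [forall k, (k \notin S) ==> (y 0 k == 0)]].

Lemma card_VS S : #|VS S| = (#|F| ^ #|S|)%N.
Proof.
have -> : VS S = (fun g : {ffun 'I_n -> F} => \row_k g k) @: pffun_on (0 : F) S predT.
  apply/setP => y; rewrite inE; apply/forallP/imsetP.
  - move=> h; exists [ffun k => y 0 k]; last by apply/rowP => k; rewrite !mxE ffunE.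
    apply/pffun_onP; split=> //; apply/supportP => k kS; rewrite ffunE.
    by have /implyP/(_ kS)/eqP := h k.
  - case=> g /pffun_onP [/supportP sg _] -> k; apply/implyP => kS.
    by rewrite mxE sg.
rewrite card_imset; first by rewrite card_pffun_on.
by move=> g1 g2 /rowP h; apply/ffunP => k; have := h k; rewrite !mxE.
Qed.

Section Code.
Variable D : {vspace 'rV[F]_n}.
Hypothesis Hsd : herm_self_dual D.

Definition Dset := [set x : 'rV[F]_n | x \in D].
Definition Xs (S : {set 'I_n}) := [set x in Dset | [forall k, (k \in S) ==> (x 0 k == 0)]].
Definition Ys (S : {set 'I_n}) := [set y in Dset | [forall k, (k \notin S) ==> (y 0 k == 0)]].

Definition delta (k : 'I_n) : 'rV[F]_n := \row_j (j == k)%:R.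

Lemma herm_delta x k : herm x (delta k) = x 0 k.
Proof.
rewrite /herm (bigD1 k) //= big1 ?addr0; first by rewrite mxE eqxx expr1n mulr1.
by move=> j /negPf jk; rewrite mxE jk expr0n mulr0.
Qed.

Lemma VS_add S y y' : y \in VS S -> y' \in VS S -> y + y' \in VS S.
Proof.
rewrite !inE => /forallP h /forallP h'; apply/forallP => k; apply/implyP => kS.
by rewrite mxE (eqP (implyP (h k) kS)) (eqP (implyP (h' k) kS)) addr0.
Qed.

Lemma VS_scale S a y : y \in VS S -> a *: y \in VS S.
Proof.
rewrite !inE => /forallP h; apply/forallP => k; apply/implyP => kS.
by rewrite mxE (eqP (implyP (h k) kS)) mulr0.
Qed.

Lemma count_x S x : x \in Dset -> 
  (#|F| * #|[set y in VS S | herm x y == 0%R]| =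
   if x \in Xs S then #|F| * #|VS S| else #|VS S|)%N.
Proof.
move=> xD; case: ifP => xX.
  congr muln; apply: eq_card => y; rewrite !inE andb_idr // => /forallP hy.
  move: xX; rewrite inE => /andP [_ /forallP hx].
  apply/eqP; rewrite /herm big1 // => k _.
  case kS: (k \in S).
    by rewrite (eqP (implyP (hx k) kS)) mul0r.
  by rewrite (eqP (implyP (hy k) (negbT kS))) expr0n mulr0.
have [k kS xk] : exists2 k, k \in S & x 0 k != 0.
  move: xX; rewrite inE xD /= => /negbT; rewrite negb_forall => /existsP [k].
  by rewrite negb_imply => /andP [kS xk]; exists k.
symmetry; apply: quarter.
- exact: VS_add.
- by move=> u uV; rewrite -scaleN1r VS_scale.
- by move=> u v _ _; rewrite herm_addr.
- move=> a; exists (((a / x 0 k) ^+ 2) *: delta k).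
    apply: VS_scale; rewrite inE; apply/forallP => j; apply/implyP => jS.
    have jk : j != k by apply: contraNneq jS => ->.
    by rewrite mxE (negPf jk).
  by rewrite herm_scaler sqsq herm_delta divfK.
Qed.

Lemma count_y S y : y \in VS S -> 
  (#|F| * #|[set x in Dset | herm x y == 0%R]| =
   if y \in Ys S then #|F| * #|Dset| else #|Dset|)%N.
Proof.
move=> yV; case: ifP => yY.
  congr muln; apply: eq_card => x; rewrite !inE andb_idr // => xD.
  move: yY; rewrite !inE => /andP [yD _].
  by apply/eqP; apply: (proj1 (Hsd y)).
have yD : y \notin D.
  by apply: contraFN yY => yD; move: yV; rewrite !inE yD.
have [x0 x0D hx0] : exists2 x0, x0 \in D & herm x0 y != 0.
  apply/exists_inP; apply: contraR yD; rewrite negb_exists_in => /forall_inP h.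
  by apply/(proj2 (Hsd y)) => x xD; apply/eqP; move: (h x xD); rewrite negbK.
symmetry; apply: quarter.
- by move=> u v; rewrite !inE; apply: memvD.
- by move=> u; rewrite !inE memvN.
- by move=> u v _ _; rewrite herm_addl.
- move=> a; exists ((a / herm x0 y) *: x0).
    by rewrite inE memvZ.
  by rewrite herm_scalel divfK.
Qed.

Lemma key (S : {set 'I_n}) : (#|F| ^ #|S| * #|Xs S| = #|Dset| * #|Ys S|)%N.
Proof.
pose N := (\sum_(x in Dset) \sum_(y in VS S) (herm x y == 0%R))%N.
have N1 : (#|F| * N = #|Dset :&: Xs S| * (#|F| * #|VS S|) + #|Dset :\: Xs S| * #|VS S|)%N.
  rewrite /N big_distrr /=; apply: sum_split2 => x xD xX.
    by rewrite -card_sep count_x // xX.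
  by rewrite -card_sep count_x // (negPf xX).
have N2 : (#|F| * N = #|VS S :&: Ys S| * (#|F| * #|Dset|) + #|VS S :\: Ys S| * #|Dset|)%N.
  rewrite /N exchange_big big_distrr /=; apply: sum_split2 => y yV yY.
    by rewrite -card_sep (count_y yV) yY.
  by rewrite -card_sep (count_y yV) (negPf yY).
have e1 := cardsID (Xs S) Dset.
have e2 := cardsID (Ys S) (VS S).
have s1 : Dset :&: Xs S = Xs S.
  by apply/setIidPr; apply/subsetP => x; rewrite inE => /andP[].
have s2 : VS S :&: Ys S = Ys S.
  by apply/setIidPr; apply/subsetP => y; rewrite !inE => /andP [_ ->].
rewrite s1 in N1 e1; rewrite s2 in N2 e2.
rewrite -card_VS; rewrite HF in N1 N2.
move: N1 N2 e1 e2.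
move: (#|Xs S|) (#|Dset :\: Xs S|) (#|Ys S|) (#|VS S :\: Ys S|) (#|Dset|) (#|VS S|) N.
move=> X X' Y Y' Dc v M h1 h2 h3 h4.
nia.
Qed.

Definition supp x := [set j : 'I_n | x 0 j != 0].

Lemma forall_supp (S : {set 'I_n}) y :
  [forall j, (j \notin S) ==> (y 0 j == 0)] = (supp y \subset S).
Proof.
apply/forallP/subsetP => h j.
  by rewrite inE => yj; apply: contraR yj => jS; exact: (implyP (h j) jS).
by apply/implyP => jS; apply: contraR jS => yj; apply: h; rewrite inE.
Qed.

Lemma forall_zero (S : {set 'I_n}) x :
  [forall j, (j \in S) ==> (x 0 j == 0)] = (S \subset ~: supp x).
Proof.
apply/forallP/subsetP => h j.
  by move=> jS; rewrite !inE negbK; exact: (implyP (h j) jS).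
by apply/implyP => jS; move: (h j jS); rewrite !inE negbK.
Qed.

Lemma wt0 : wt (0 : 'rV[F]_n) = 0%N.
Proof. by apply/eqP; rewrite cards_eq0; apply/eqP/setP => j; rewrite !inE mxE eqxx. Qed.

Lemma wt_eq0 x : (wt x == 0%N) = (x == 0).
Proof.
apply/idP/eqP => [|->]; last by rewrite wt0.
rewrite cards_eq0 => /eqP h; apply/rowP => j.
by move/setP: h => /(_ j); rewrite !inE mxE => /negbFE/eqP.
Qed.

Definition Sk (k : 'I_n) t := [set S : {set 'I_n} | (k \in S) && (#|S| == t.+1)].

Lemma Xsum k t : (\sum_(S in Sk k t) #|Xs S| =
   \sum_(x in Dset | x 0%R k == 0%R) 'C((n - wt x).-1, t))%N.
Proof.
under eq_bigr => S _ do rewrite card_sep.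
rewrite exchange_big /= [RHS]big_mkcondr; apply: eq_bigr => x xD.
rewrite -card_sep; case: ifP => xk.
  have kZ : k \in ~: supp x by rewrite !inE negbK.
  have cZ : #|~: supp x| = (n - wt x)%N.
    have e := cardsC (supp x); rewrite card_ord in e.
    by change (wt x) with #|supp x|; lia.
  rewrite -cZ -(count_Sk t kZ); apply: eq_card => S; rewrite !inE forall_zero.
  by rewrite andbA.
apply/eqP; rewrite cards_eq0; apply/eqP/setP => S; rewrite !inE.
apply/negP => /andP [/andP [kS _] /forallP h].
by move: (implyP (h k) kS); rewrite xk.
Qed.

End Code.

End Field4.

End PartB.
Import PartB.

Module PartE.
Import GRing.Theory.
Local Open Scope ring_scope.

Section Y.
Variable F : finFieldType.
Variable n : nat.
Variable D : {vspace 'rV[F]_n}.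
Hypothesis Hmw : forall x : 'rV[F]_n, x \in D -> x != 0 -> (10 <= wt x)%N.

Lemma inner_y k t y : (t <= 9)%N -> y \in Dset D -> y != 0 ->
  #|[set S in Sk k t | [forall j, (j \notin S) ==> (y 0 j == 0)]]| =
  [&& t == 9, wt y == 10 & y 0 k != 0] :> nat.
Proof.
move=> t9 yD y0.
have wy : (10 <= wt y)%N by apply: Hmw; rewrite inE in yD.
case H: [&& t == 9, wt y == 10 & y 0 k != 0].
  case/and3P: H => /eqP t9' /eqP w10 yk.
  transitivity #|[set supp y]|; last by rewrite cards1.
  apply: eq_card => S; rewrite !inE forall_supp.
  apply/idP/idP.
    case/andP => /andP [kS /eqP cS] sub.
    rewrite eq_sym eqEcard sub /= cS t9'.
    by move: w10; rewrite /wt => ->.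
  move/eqP => ->; rewrite inE yk subxx andbT /= t9'.
  by move: w10; rewrite /wt => ->.
apply/eqP; rewrite cards_eq0; apply/eqP/setP => S; rewrite !inE forall_supp.
apply/negP => /andP [/andP [kS /eqP cS] sub].
have le : (wt y <= t.+1)%N by rewrite -cS; exact: subset_leq_card sub.
have t9' : t = 9%N by lia.
have w10 : wt y = 10%N by lia.
have eS : supp y = S by apply/eqP; rewrite eqEcard sub cS t9' -w10 leqnn.
move: H; rewrite t9' w10 !eqxx /=; move: kS; rewrite -eS inE => ->.
by [].
Qed.

Lemma supp0 : supp (0 : 'rV[F]_n) = set0.
Proof. by apply/setP => j; rewrite !inE mxE eqxx. Qed.

Lemma Ysum k t : (t <= 9)%N ->
  (\sum_(S in Sk k t) #|Ys D S| =
   'C(n.-1, t) + (t == 9) * #|[set y in Dset D | (wt y == 10) && (y 0%R k != 0%R)]|)%N.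
Proof.
move=> t9.
under eq_bigr => S _ do rewrite card_sep.
rewrite exchange_big /= (bigD1 0) /=; last by rewrite inE mem0v.
congr addn.
  rewrite -card_sep.
  have kT : k \in [set: 'I_n] by rewrite inE.
  have := count_Sk t kT; rewrite cardsT card_ord => <-.
  apply: eq_card => S; rewrite !inE forall_supp supp0 sub0set subsetT !andbT.
  by [].
rewrite (eq_bigr (fun y => [&& t == 9%N, wt y == 10%N & y 0 k != 0] : nat)); last first.
  by move=> y /andP [yD y0]; rewrite -card_sep inner_y.
case: (t =P 9%N) => [_|_] /=.
  rewrite mul1n card_sep [RHS](bigD1 0) /=; last by rewrite inE mem0v.
  by rewrite wt0.
by rewrite big1 ?muln0.
Qed.

End Y.

End PartE.
Import PartE.

Local Open Scope Z_scope.

Fixpoint binZ (n k : nat) : Z :=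
  match k with
  | 0%N => 1
  | S k' => (binZ n k' * Z.of_nat (n - k')%N / Z.of_nat k)
  end.

Lemma binZ_ok n k : Z.of_nat 'C(n, k) = binZ n k.
Proof.
elim: k => [|k IH] /=; first by rewrite bin0.
have h := mul_bin_left n k.
have hz : (Z.of_nat k.+1 * Z.of_nat 'C(n, k.+1) = Z.of_nat (n - k) * Z.of_nat 'C(n, k)).
  by rewrite -!Nat2Z.inj_mul; congr Z.of_nat; exact h.
rewrite -IH Z.mul_comm -hz Z.mul_comm Z.div_mul //.
Qed.

Definition sumZ (l : seq Z) : Z := foldr Z.add 0 l.

Lemma Z_sumn l : Z.of_nat (sumn l) = sumZ (map Z.of_nat l).
Proof. by elim: l => //= a l IH; rewrite Nat2Z.inj_add IH. Qed.

Lemma Z_expn m e : Z.of_nat (m ^ e) = (Z.of_nat m ^ Z.of_nat e).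
Proof.
elim: e => [|e IH]; first by [].
by rewrite expnS Nat2Z.inj_mul IH Nat2Z.inj_succ Z.pow_succ_r //; lia.
Qed.

Local Close Scope Z_scope.
Lemma sum31 (g : nat -> nat) : \sum_(i < 31) g i = sumn (map g (iota 0%N 31%N)).
Proof. by rewrite -(big_mkord predT g) sumnE big_map. Qed.

Definition good i := (i == 0)%N || ((10 <= i <= 28)%N && ~~ odd i).

Ltac evalbin := repeat match goal with
  | h : context[binZ ?a ?b] |- _ => let v := eval vm_compute in (binZ a b) in change (binZ a b) with v in h
  | h : context[Z.pow 4 ?a] |- _ => let v := eval vm_compute in (Z.pow 4 a) in change (Z.pow 4 a) with v in h
  end.

Local Open Scope Z_scope.
Lemma arith (bz : nat -> Z) (e : Z) :
  bz 0%N = 1 ->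
  (forall i, ~~ good i -> bz i = Z0) ->
  (forall t, (t <= 8)%N -> (4 ^ Z.of_nat t.+1 *
      sumZ (map (fun i => bz i * binZ (29 - i)%N t) (iota 0%N 31%N)) = 4 ^ 15 * binZ 29%N t)) ->
  (4 ^ 10 * sumZ (map (fun i => bz i * binZ (29 - i)%N 9) (iota 0%N 31%N))
      = 4 ^ 15 * (binZ 29%N 9%N + e)) ->
  (bz 10%N = 2 * e /\ bz 12%N + 9 * bz 10%N = 71253).
Proof.
move=> b0 hz H H9.
have h0 := H 0%N isT; have h1 := H 1%N isT; have h2 := H 2%N isT.
have h3 := H 3%N isT; have h4 := H 4%N isT; have h5 := H 5%N isT.
have h6 := H 6%N isT; have h7 := H 7%N isT; have h8 := H 8%N isT.
clear H; rewrite /sumZ in h0 h1 h2 h3 h4 h5 h6 h7 h8 H9.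
cbn [foldr map iota] in *.
have z1 := hz 1%N isT. have z2 := hz 2%N isT. have z3 := hz 3%N isT.
have z4 := hz 4%N isT. have z5 := hz 5%N isT. have z6 := hz 6%N isT.
have z7 := hz 7%N isT. have z8 := hz 8%N isT. have z9 := hz 9%N isT.
have z11 := hz 11%N isT. have z13 := hz 13%N isT. have z15 := hz 15%N isT.
have z17 := hz 17%N isT. have z19 := hz 19%N isT. have z21 := hz 21%N isT.
have z23 := hz 23%N isT. have z25 := hz 25%N isT. have z27 := hz 27%N isT.
have z29 := hz 29%N isT. have z30 := hz 30%N isT.
clear hz.
rewrite z1 z2 z3 z4 z5 z6 z7 z8 z9 z11 z13 z15 z17 z19 z21 z23 z25 z27 z29 z30 b0 in h0.
rewrite z1 z2 z3 z4 z5 z6 z7 z8 z9 z11 z13 z15 z17 z19 z21 z23 z25 z27 z29 z30 b0 in h1.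
rewrite z1 z2 z3 z4 z5 z6 z7 z8 z9 z11 z13 z15 z17 z19 z21 z23 z25 z27 z29 z30 b0 in h2.
rewrite z1 z2 z3 z4 z5 z6 z7 z8 z9 z11 z13 z15 z17 z19 z21 z23 z25 z27 z29 z30 b0 in h3.
rewrite z1 z2 z3 z4 z5 z6 z7 z8 z9 z11 z13 z15 z17 z19 z21 z23 z25 z27 z29 z30 b0 in h4.
rewrite z1 z2 z3 z4 z5 z6 z7 z8 z9 z11 z13 z15 z17 z19 z21 z23 z25 z27 z29 z30 b0 in h5.
rewrite z1 z2 z3 z4 z5 z6 z7 z8 z9 z11 z13 z15 z17 z19 z21 z23 z25 z27 z29 z30 b0 in h6.
rewrite z1 z2 z3 z4 z5 z6 z7 z8 z9 z11 z13 z15 z17 z19 z21 z23 z25 z27 z29 z30 b0 in h7.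
rewrite z1 z2 z3 z4 z5 z6 z7 z8 z9 z11 z13 z15 z17 z19 z21 z23 z25 z27 z29 z30 b0 in h8.
rewrite z1 z2 z3 z4 z5 z6 z7 z8 z9 z11 z13 z15 z17 z19 z21 z23 z25 z27 z29 z30 b0 in H9.
evalbin.
lia.
Qed.
Local Close Scope Z_scope.

Import GRing.Theory.

Section Main.
Variable F : finFieldType.
Hypothesis HF : #|F| = 4%N.
Variable D : {vspace 'rV[F]_30}.
Hypothesis Hsd : herm_self_dual D.

Lemma cardD : #|Dset D| = (4 ^ 15)%N.
Proof.
have := key HF Hsd [set: 'I_30].
have -> : Xs D [set: 'I_30] = [set 0%R].
  apply/setP => x; rewrite !inE; apply/andP/eqP.
    case=> _ /forallP h; apply/rowP => j; rewrite mxE; apply/eqP.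
    by have := h j; rewrite inE.
  by move=> ->; split; [exact: mem0v | apply/forallP => j; rewrite mxE eqxx implybT].
have -> : Ys D [set: 'I_30] = Dset D.
  by apply/setP => x; rewrite !inE; apply/andb_idr => _; apply/forallP => j; rewrite inE.
rewrite cards1 muln1 cardsT card_ord HF => h.
apply/eqP; rewrite -(@eqn_exp2r _ _ 2) // -expnM /=.
by rewrite expnS expn1 h.
Qed.

Hypothesis Hmw : forall x : 'rV[F]_30, x \in D -> x != 0%R -> (10 <= wt x)%N.

Definition bcnt (i : nat) := #|[set x in Dset D | (x 0%R ord0 == 0%R) && (wt x == i)]|.
Definition e10 := #|[set y in Dset D | (wt y == 10) && (y 0%R ord0 != 0%R)]|.

Lemma wt_lt31 (x : 'rV[F]_30) : (wt x < 31)%N.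
Proof. by rewrite ltnS -{2}(card_ord 30); exact: max_card. Qed.

Lemma wdecomp t : (\sum_(x in Dset D | x 0%R ord0 == 0%R) 'C((30 - wt x).-1, t) =
   \sum_(i < 31) bcnt i * 'C((30 - i).-1, t))%N.
Proof.
rewrite (partition_big (fun x => inord (wt x) : 'I_31) predT) //=.
apply: eq_bigr => i _.
rewrite (eq_bigr (fun _ => 'C((30 - i).-1, t))); last first.
  move=> x /andP [_ /eqP <-]; by rewrite inordK ?wt_lt31.
rewrite sum_nat_const /bcnt; congr muln; apply: eq_card => x; rewrite !inE.
rewrite unfold_in /= !inE -andbA -val_eqE /= inordK ?wt_lt31 //.
Qed.

Lemma EqT t : (t <= 9)%N ->
  (4 ^ t.+1 * \sum_(i < 31) bcnt i * 'C((30 - i).-1, t) =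
   4 ^ 15 * ('C(29, t) + (t == 9) * e10))%N.
Proof.
move=> t9.
rewrite -wdecomp -(Xsum HF D ord0 t) -cardD -(Ysum Hmw ord0 t9).
rewrite !big_distrr /=; apply: eq_bigr => S; rewrite inE => /andP [_ /eqP cS].
by have := key HF Hsd S; rewrite HF cS.
Qed.

Lemma Zsum t : Z.of_nat (\sum_(i < 31) bcnt i * 'C((30 - i).-1, t)) =
  sumZ (map (fun i => Z.mul (Z.of_nat (bcnt i)) (binZ (29 - i) t)) (iota 0 31)).
Proof.
rewrite (sum31 (fun i => bcnt i * 'C((30 - i).-1, t))) Z_sumn -map_comp; congr sumZ; apply: eq_map => i /=.
by rewrite Nat2Z.inj_mul binZ_ok -subnS subSS.
Qed.

Lemma bcnt0 : bcnt 0 = 1%N.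
Proof.
transitivity #|[set (0%R : 'rV[F]_30)]|; last by rewrite cards1.
apply: eq_card => x; rewrite !inE wt_eq0; case: (x =P 0%R) => [->|_]; rewrite ?andbF //.
by rewrite mem0v mxE eqxx.
Qed.

Lemma bcnt_bad i : ~~ good i -> bcnt i = 0%N.
Proof.
move=> gi; apply/eqP; rewrite cards_eq0; apply/eqP/setP => x; rewrite !inE.
apply/negP => /andP [xD /andP [xk /eqP wi]].
have ev : ~~ odd (wt x).
  rewrite -(natr_eq0_even HF) -(herm_self HF); apply/eqP.
  by apply: (proj1 (Hsd x) xD).
have lt30 : (wt x < 30)%N.
  have : supp x \proper [set: 'I_30].
    rewrite properT; apply/eqP => h.
    by have := in_setT (ord0 : 'I_30); rewrite -h inE xk.
  by move/proper_card; rewrite cardsT card_ord.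
move: gi; rewrite /good -wi.
case: (x =P 0%R) => [->|/eqP x0]; first by rewrite wt0.
have w10 := Hmw xD x0.
have h29 : wt x != 29%N by apply: contraNneq ev => ->.
rewrite ev andbT negb_or => /andP [_]; rewrite negb_and -!ltnNge.
lia.
Qed.

Lemma wt_scale a (y : 'rV[F]_30) : a != 0%R -> wt (a *: y) = wt y.
Proof.
move=> a0; apply: eq_card => j; rewrite !inE mxE mulf_eq0 negb_or a0.
by [].
Qed.

Definition fcnt := #|[set y in Dset D | (wt y == 10) && (y 0%R ord0 == 1%R)]|.

Lemma e10_3 : e10 = (3 * fcnt)%N.
Proof.
rewrite /e10 -sum1_card (partition_big (fun y : 'rV[F]_30 => y 0%R ord0) (fun a : F => a != 0%R)) /=;
  last by move=> y; rewrite inE => /andP [_ /andP [_ ->]].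
rewrite (eq_bigr (fun _ => fcnt)).
  rewrite sum_nat_const.
  have -> : #|[pred a : F | a != 0%R]| = 3%N.
    by have := cardC1 (0%R : F); rewrite HF.
  by [].
move=> a a0; rewrite sum1dep_card.
transitivity #|(fun y => (a *: y)%R) @: [set y in Dset D | (wt y == 10) && (y 0%R ord0 == 1%R)]|.
  apply: eq_card => y; rewrite !inE; apply/idP/imsetP.
    case/andP => /andP [yD /andP [wy ya0]] /eqP ya.
    exists (a^-1 *: y)%R; last by rewrite scalerA divff // scale1r.
    rewrite !inE memvZ // wt_scale ?invr_eq0 // wy /= mxE ya mulVf //.
  case=> z; rewrite !inE => /andP [zD /andP [wz /eqP z1]] ->.
  by rewrite memvZ // wt_scale // wz mxE z1 mulr1 a0 eqxx.
by rewrite card_imset //; apply: scalerI.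
Qed.

Lemma num_split : num_weight D 10 = (bcnt 10 + e10)%N.
Proof.
rewrite /num_weight -(cardsID [set x : 'rV[F]_30 | x 0%R ord0 == 0%R]).
congr addn; apply: eq_card => x; rewrite !inE.
  by case: (x \in D); case: (wt x == 10); case: (x 0%R ord0 == 0%R).
by case: (x \in D); case: (wt x == 10); case: (x 0%R ord0 == 0%R).
Qed.

End Main.

Local Open Scope Z_scope.

Lemma Ht_lem (F : finFieldType) (HF : #|F| = 4%N) (D : {vspace 'rV[F]_30})
  (Hsd : herm_self_dual D)
  (Hmw : forall x : 'rV[F]_30, x \in D -> x != 0%R -> (10 <= wt x)%N) t :
  (t <= 8)%N -> 4 ^ Z.of_nat t.+1 *
      sumZ (map (fun i => Z.of_nat (bcnt D i) * binZ (29 - i)%N t) (iota 0%N 31%N))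
      = 4 ^ 15 * binZ 29%N t.
Proof.
move=> t8; have := EqT HF Hsd Hmw (leq_trans t8 (isT : (8 <= 9)%N)).
have -> : (t == 9%N) = false by apply/eqP => e; rewrite e in t8.
rewrite mul0n addn0 => /(congr1 Z.of_nat).
rewrite Nat2Z.inj_mul.
rewrite Nat2Z.inj_mul.
rewrite !Z_expn. rewrite Zsum binZ_ok (_ : Z.of_nat 4 = 4) // (_ : Z.of_nat 15 = 15) //.
Qed.

Lemma natZ_eq (a b c d : nat) : (a * b = c * d)%N ->
  Z.of_nat a * Z.of_nat b = Z.of_nat c * Z.of_nat d.
Proof. by move=> h; rewrite -!Nat2Z.inj_mul; congr Z.of_nat. Qed.

Lemma toZ9 (q S c e : nat) (zS : Z) : Z.of_nat S = zS -> Z.of_nat c = binZ 29%N 9%N ->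
  (q ^ 10 * S = q ^ 15 * (c + e))%N -> q = 4%N ->
  4 ^ 10 * zS = 4 ^ 15 * (binZ 29%N 9%N + Z.of_nat e).
Proof.
move=> hS hc h hq; have := congr1 Z.of_nat h.
rewrite (Nat2Z.inj_mul (q ^ 10)%N) (Nat2Z.inj_mul (q ^ 15)%N) Nat2Z.inj_add (Z_expn q 10%N) (Z_expn q 15%N) hS hc hq.
by [].
Qed.

Lemma H9_lem (F : finFieldType) (HF : #|F| = 4%N) (D : {vspace 'rV[F]_30})
  (Hsd : herm_self_dual D)
  (Hmw : forall x : 'rV[F]_30, x \in D -> x != 0%R -> (10 <= wt x)%N) :
  4 ^ 10 * sumZ (map (fun i => Z.of_nat (bcnt D i) * binZ (29 - i)%N 9%N) (iota 0%N 31%N))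
      = 4 ^ 15 * (binZ 29%N 9%N + Z.of_nat (e10 D)).
Proof.
have h := EqT HF Hsd Hmw (leqnn 9); rewrite eqxx (mul1n (e10 D)) in h.
exact: (toZ9 (Zsum D 9) (binZ_ok 29 9) h).
Qed.

Local Close Scope Z_scope.

Theorem fact5p4 (F : finFieldType) (HF : #|F| = 4%N) (D : {vspace 'rV[F]_30})
  (Hsd : herm_self_dual D) (Hmin : min_weight D 10) :
  exists beta : nat, num_weight D 10 = (9 * beta)%N /\ (1 <= beta <= 1319)%N.
Proof.
case: Hmin => [[x0 x0D [x0nz wx0]] Hmw].
have hA := num_split D.
have he := e10_3 HF D.
have [hb hb12] := arith (bz := fun i => Z.of_nat (bcnt D i)) (e := Z.of_nat (e10 D))
  (f_equal Z.of_nat (bcnt0 D)) (fun i gi => f_equal Z.of_nat (bcnt_bad HF Hsd Hmw gi))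
  (Ht_lem HF Hsd Hmw) (H9_lem HF Hsd Hmw).
have A1 : (0 < num_weight D 10)%N.
  by apply/card_gt0P; exists x0; rewrite inE x0D wx0 eqxx.
exists (fcnt D); split; lia.
Qed.
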